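(* Let $T:\mathcal P(\mathbb R^n)\to\mathcal P(\mathbb R^n)$ be given by $TA=\{y\in\mathbb R^n:\ \langle x,y\rangle\ge 1\ \forall x\in A\}$, and let $\mathcal C=\{TK:K\subseteq\mathbb R^n\}$. Every $K\in\mathcal C$ other than $\emptyset$ and $\mathbb R^n$ has a unique point closest to the origin. For $u\in S^{n-1}$ let $\mathcal C_u$ be the set of those $K\in\mathcal C\setminus\{\emptyset,\mathbb R^n\}$ whose closest point to the origin lies on the ray $\{\lambda u:\lambda>0\}$. Then for every $u\in S^{n-1}$ and every $K\in\mathcal C_u$ we have $TK\in\mathcal C_u$.
   Context: $\mathcal P(\mathbb R^n)$ is the power set of $\mathbb R^n$, $\langle\cdot,\cdot\rangle$ the standard inner product, and $S^{n-1}$ the Euclidean unit sphere. *)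

(* Defs.v *)
From HB Require Import structures.
From mathcomp Require Import all_boot all_order all_algebra.
From mathcomp Require Import boolp classical_sets reals.
Set Implicit Arguments. Unset Strict Implicit. Unset Printing Implicit Defensive.
Import Order.TTheory GRing.Theory Num.Theory.
Local Open Scope ring_scope.
Local Open Scope classical_set_scope.

Definition dotv (R : realType) (n : nat) (x y : 'rV[R]_n) : R :=
  \sum_(i < n) x ord0 i * y ord0 i.

Definition Tmap (R : realType) (n : nat) (A : set 'rV[R]_n) : set 'rV[R]_n :=
  [set y | forall x, A x -> 1 <= dotv x y].

Definition inC (R : realType) (n : nat) (K : set 'rV[R]_n) : Prop :=
  exists L : set 'rV[R]_n, K = Tmap L.

Definition closest_to_origin (R : realType) (n : nat) (K : set 'rV[R]_n)
  (p : 'rV[R]_n) : Prop :=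
  K p /\ forall q, K q -> dotv p p <= dotv q q.

Definition on_sphere (R : realType) (n : nat) (u : 'rV[R]_n) : Prop :=
  dotv u u = 1.

Definition on_ray (R : realType) (n : nat) (u p : 'rV[R]_n) : Prop :=
  exists lam : R, 0 < lam /\ p = lam *: u.

Definition inCu (R : realType) (n : nat) (u : 'rV[R]_n) (K : set 'rV[R]_n) : Prop :=
  [/\ inC K, K <> set0, K <> setT,
      (exists p, closest_to_origin K p) &
      (forall p, closest_to_origin K p -> on_ray u p)].

(* Main.v *)
Require Import Defs.
From mathcomp Require Import all_boot all_order all_algebra.
From mathcomp Require Import boolp classical_sets reals.
From mathcomp Require Import ring lra.
Set Implicit Arguments. Unset Strict Implicit. Unset Printing Implicit Defensive.
Import Order.TTheory GRing.Theory Num.Theory.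
Local Open Scope ring_scope.
Local Open Scope classical_set_scope.

Section Dot.
Variables (R : realType) (n : nat).
Implicit Types (x y z : 'rV[R]_n) (a : R).

Lemma dotvC x y : dotv x y = dotv y x.
Proof. by apply: eq_bigr => i _; rewrite mulrC. Qed.

Lemma dotvDr x y z : dotv x (y + z) = dotv x y + dotv x z.
Proof. by rewrite /dotv -big_split; apply: eq_bigr => i _; rewrite mxE mulrDr. Qed.

Lemma dotvBr x y z : dotv x (y - z) = dotv x y - dotv x z.
Proof.
by rewrite /dotv -sumrB; apply: eq_bigr => i _; rewrite !mxE mulrBr.
Qed.

Lemma dotvZr a x y : dotv x (a *: y) = a * dotv x y.
Proof.
by rewrite /dotv mulr_sumr; apply: eq_bigr => i _; rewrite mxE mulrCA.
Qed.

Lemma dotvDl x y z : dotv (y + z) x = dotv y x + dotv z x.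
Proof. by rewrite dotvC dotvDr !(dotvC x). Qed.

Lemma dotvBl x y z : dotv (y - z) x = dotv y x - dotv z x.
Proof. by rewrite dotvC dotvBr !(dotvC x). Qed.

Lemma dotvZl a x y : dotv (a *: y) x = a * dotv y x.
Proof. by rewrite dotvC dotvZr dotvC. Qed.

Lemma dotv_ge0 x : 0 <= dotv x x.
Proof. by apply: sumr_ge0 => i _; rewrite -expr2 sqr_ge0. Qed.

Lemma dotv_eq0 x : dotv x x = 0 -> x = 0.
Proof.
move=> h; apply/rowP => j; rewrite mxE.
have hp : forall i : 'I_n, true -> 0 <= x ord0 i * x ord0 i.
  by move=> i _; rewrite -expr2 sqr_ge0.
have := @psumr_eq0P _ _ _ _ hp h j isT.
by move/eqP; rewrite mulf_eq0 orbb => /eqP; rewrite (ord1 ord0).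
Qed.
End Dot.

Theorem lemma5p2 (R : realType) (n : nat) (u : 'rV[R]_n) (K : set 'rV[R]_n) :
  on_sphere u -> inCu u K -> inCu u (Tmap K).
Proof.
rewrite /on_sphere => hu [[L hK] K0 KT [p cp] hray].
have [lam [lam0 plam]] := hray p cp.
have [Kp pmin] := cp.
have pp : dotv p p = lam * lam by rewrite plam dotvZl dotvZr hu mulr1.
have conv : forall q, K q -> forall t, 0 <= t <= 1 -> K (p + t *: (q - p)).
  move=> q Kq t /andP[t0 t1]; move: Kp Kq; rewrite hK => Kp Kq x Lx.
  have h1 := Kp x Lx; have h2 := Kq x Lx.
  rewrite dotvDr dotvZr dotvBr; nra.
have var : forall q, K q -> dotv p p <= dotv p q.
  move=> q Kq; rewrite leNgt; apply/negP => hlt.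
  set c := dotv p p - dotv p q.
  set D := dotv (q - p) (q - p).
  have c0 : 0 < c by rewrite /c subr_gt0.
  have D0 : 0 <= D := dotv_ge0 _.
  set t := c / (c + D).
  have cD : 0 < c + D by lra.
  have tc : t * (c + D) = c by rewrite /t mulfVK // gt_eqF.
  have t0 : 0 < t by rewrite /t divr_gt0.
  have t1 : t <= 1 by rewrite /t ler_pdivrMr // mul1r; lra.
  have := pmin _ (conv q Kq t (introT andP (conj (ltW t0) t1))).
  have -> : dotv (p + t *: (q - p)) (p + t *: (q - p)) =
     dotv p p + 2 * t * dotv p (q - p) + t * t * D.
    rewrite dotvDl (dotvDr p p) (dotvDr (t *: (q - p)) p) !dotvZl !dotvZr (dotvC (q - p) p) /D.
    ring.
  have -> : dotv p (q - p) = - c by rewrite dotvBr /c; ring.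
  have : t * (t * (c + D)) = t * c by rewrite tc.
  move=> e; nra.
set li := lam^-1.
have lil : lam * li = 1 by rewrite /li mulfV // gt_eqF.
have li0 : 0 < li by rewrite /li invr_gt0.
set y0 := li *: u.
have aux : forall a b c : R, a * b = 1 -> b * b * (a * c) = b * c.
  by move=> a b c h; rewrite -[RHS]mulr1 -h; ring.
have y0y0 : dotv y0 y0 = li * li by rewrite /y0 dotvZl dotvZr hu mulr1.
have Ty0 : Tmap K y0.
  move=> q Kq; have := var q Kq; rewrite pp plam dotvZl /y0 dotvZr (dotvC u).
  rewrite ler_pM2l // => h3.
  by rewrite -lil (mulrC lam) ler_pM2l.
have key : forall y, Tmap K y ->
    dotv (y - y0) (y - y0) = dotv y y - 2 * li * dotv u y + li * li
    /\ 1 <= lam * dotv u y.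
  move=> y Ty; split.
    rewrite dotvBl !dotvBr y0y0 /y0 dotvZl dotvZr (dotvC u y); ring.
  by have := Ty p Kp; rewrite plam dotvZl.
have ymin : forall y, Tmap K y -> dotv y0 y0 <= dotv y y.
  move=> y Ty; have [e h] := key y Ty; have := dotv_ge0 (y - y0); rewrite e y0y0.
  have : li * li * 1 <= li * li * (lam * dotv u y) by rewrite ler_pM2l // mulr_gt0.
  rewrite mulr1 aux //; nra.
split.
- by exists K.
- by move=> e; have : Tmap K y0 by []; rewrite e.
- move=> e; have : Tmap K 0 by rewrite e.
  have [q /= Kq] : exists q, K q.
    by apply: contra_notP K0 => h; apply/seteqP; split => x // Kx; apply: h; exists x.
  move=> /(_ q Kq); rewrite /dotv big1 ?ler10 // => i _; by rewrite mxE ?mulr0.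
- by exists y0; split.
- move=> y [Ty ym]; exists li; split => //.
  have [e h] := key y Ty; have := ym _ Ty0; rewrite y0y0 => h1.
  have h2 : li * li * 1 <= li * li * (lam * dotv u y) by rewrite ler_pM2l // mulr_gt0.
  move: h2; rewrite mulr1 aux // => h2.
  have : dotv (y - y0) (y - y0) = 0.
    apply/eqP; rewrite eq_le dotv_ge0 andbT e; nra.
  by move/dotv_eq0/eqP; rewrite subr_eq0 => /eqP.
Qed.
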